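(* Let $\mathcal D\subset\mathbb R^3$ be a polyhedral cone with edges $E_i=\{tp_i:t\ge0\}$, $i=1,\dots,N_0$, and $\hat E=\bigcup_iE_i$. (i) For any $i\in\{1,\dots,N_0\}$ and all $x\in\mathcal D$, $d(x,E_i)\le\big|x-|x|p_i\big|\le2\,d(x,E_i)$. (ii) Let $\alpha_1,\dots,\alpha_{N_0}\in\mathbb R$. There exists $N=N(\mathcal D,\alpha_1,\dots,\alpha_{N_0})>0$ such that for any $x\in\mathcal D$, $r>0$ and $k$ with $d(x,\hat E)=d(x,E_k)$, $$N^{-1}\Big(\frac{d(x,E_k)\wedge r}{|x|\wedge r}\Big)^{\alpha_k}\le\prod_{i=1}^{N_0}\Big(\frac{d(x,E_i)\wedge r}{|x|\wedge r}\Big)^{\alpha_i}\le N\Big(\frac{d(x,E_k)\wedge r}{|x|\wedge r}\Big)^{\alpha_k}.$$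
   Context: Polyhedral cone: $\mathcal M\subset\mathbb S^2$ is a connected open subset of the unit sphere whose boundary has $N_0\ge3$ vertices $p_1,\dots,p_{N_0}$ and whose sides are arcs of great circles; $\mathcal D=\{x\in\mathbb R^3\setminus\{\mathbf 0\}:x/|x|\in\mathcal M\}$. (The paper additionally assumes that near each $p_i$, $\mathcal D$ coincides locally with a translated wedge $\{(\rho\cos\theta,\rho\sin\theta):\rho>0,0<\theta<\kappa_i\}\times\mathbb R$ up to rotation, $\kappa_i\in(0,2\pi)\setminus\{\pi\}$, and near other boundary points of $\mathcal M$ locally with a half ball.) *)

(* Defs.v *)
From HB Require Import structures.
From mathcomp Require Import all_boot all_order all_algebra.
From mathcomp Require Import all_classical all_reals all_analysis.
Set Implicit Arguments. Unset Strict Implicit. Unset Printing Implicit Defensive.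
Import Order.TTheory GRing.Theory Num.Theory.
Import numFieldNormedType.Exports.
Local Open Scope classical_set_scope.
Local Open Scope ring_scope.

Section PolyCone.
Variable R : realType.
Local Notation V := 'rV[R]_3.

(* Euclidean inner product and norm on R^3 (the library norm on matrices is the sup norm). *)
Definition dot (u v : V) : R := (u *m v^T) 0 0.
Definition enorm (u : V) : R := Num.sqrt (dot u u).

Definition dist_set (x : V) (A : set V) : R := inf [set enorm (x - y) | y in A].

Definition sphere : set V := [set u | enorm u = 1].

Definition cone (M : set V) : set V := [set x | x != 0 /\ M ((enorm x)^-1 *: x)].

Definition edge (p : V) : set V := [set t *: p | t in [set t : R | 0 <= t]].

Definition great_arc (a b : V) (S : set V) : Prop :=
  exists (u v : V) (th : R),
    [/\ enorm u = 1, enorm v = 1, dot u v = 0 & 0 < th < 2 * pi] /\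
    [/\ u = a, cos th *: u + sin th *: v = b &
        S = [set cos t *: u + sin t *: v | t in [set t : R | 0 <= t <= th]]].

Definition wedge3 (kappa : R) : set V :=
  [set z | exists rho th : R, [/\ 0 < rho, 0 < th < kappa,
            z 0 0 = rho * cos th & z 0 1 = rho * sin th]].

Definition sbdry (M : set V) : set V := closure M `\` M.

Definition polyhedral_cone (N0 : nat) (p : 'I_N0 -> V) (M : set V) : Prop :=
  [/\ (3 <= N0)%N,
      M `<=` sphere,
      (exists U : set V, open U /\ M = U `&` sphere),
      connected M &
      (forall i, enorm (p i) = 1) /\ injective p] /\
  [/\
      (exists S : 'I_N0 -> set V,
          (forall i, great_arc (p i) (p (ordS i)) (S i)) /\
          sbdry M = \bigcup_(i in setT) S i),
      (* near each vertex, D is locally a rotated, translated wedge x R *)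
      (forall i, exists (kappa rho : R) (Q : 'M[R]_3),
          [/\ 0 < kappa < 2 * pi, kappa != pi, Q *m Q^T = 1%:M, 0 < rho &
              forall y, enorm (y - p i) < rho ->
                (cone M y <-> wedge3 kappa ((y - p i) *m Q^T))]) &
      (* near other boundary points, D is locally a half ball *)
      (forall q, sbdry M q -> (forall i, q != p i) ->
          exists (rho : R) (n : V), [/\ 0 < rho, enorm n = 1 &
              forall y, enorm (y - q) < rho -> (cone M y <-> 0 < dot (y - q) n)])].

End PolyCone.

(* Main.v *)
Require Import Defs.
From HB Require Import structures.
From mathcomp Require Import all_boot all_order all_algebra.
From mathcomp Require Import all_classical all_reals all_analysis.
From mathcomp Require Import ring lra.
Import Order.TTheory GRing.Theory Num.Theory.
Import numFieldNormedType.Exports.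
Local Open Scope classical_set_scope.
Local Open Scope ring_scope.

Section E.

Context {R : realType}.
Implicit Types u v x y : 'rV[R]_3.
Implicit Types A B : set 'rV[R]_3.

Lemma dotE u v : dot u v = u 0 0 * v 0 0 + u 0 1 * v 0 1 + u 0 2 * v 0 2.
Proof.
rewrite /dot !mxE !big_ord_recr big_ord0 /= !mxE add0r.
by congr (u 0 _ * v 0 _ + u 0 _ * v 0 _ + u 0 _ * v 0 _); apply/val_inj.
Qed.
 

Lemma enormE u : enorm u = Num.sqrt (u 0 0 ^+ 2 + u 0 1 ^+ 2 + u 0 2 ^+ 2).
Proof. by rewrite /enorm dotE !expr2. Qed.

Lemma enorm_ge0 u : 0 <= enorm u.
Proof. exact: sqrtr_ge0. Qed.

Lemma enormN u : enorm (- u) = enorm u.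
Proof. by rewrite !enormE !mxE !sqrrN. Qed.

Lemma enormB u v : enorm (u - v) = enorm (v - u).
Proof. by rewrite -enormN opprB. Qed.

Lemma enormZ (a : R) u : enorm (a *: u) = `|a| * enorm u.
Proof.
rewrite !enormE !mxE !exprMn -!mulrDr sqrtrM ?sqr_ge0 //.
by rewrite sqrtr_sqr.
Qed.

Lemma sqrt_tri (a0 a1 a2 b0 b1 b2 : R) :
  Num.sqrt ((a0 + b0) ^+ 2 + (a1 + b1) ^+ 2 + (a2 + b2) ^+ 2) <=
  Num.sqrt (a0 ^+ 2 + a1 ^+ 2 + a2 ^+ 2) + Num.sqrt (b0 ^+ 2 + b1 ^+ 2 + b2 ^+ 2).
Proof.
set A := a0 ^+ 2 + a1 ^+ 2 + a2 ^+ 2.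
set B := b0 ^+ 2 + b1 ^+ 2 + b2 ^+ 2.
have hA : 0 <= A by rewrite /A; nra.
have hB : 0 <= B by rewrite /B; nra.
have hs : 0 <= Num.sqrt A + Num.sqrt B by rewrite addr_ge0 ?sqrtr_ge0.
rewrite -[X in _ <= X]ger0_norm // -sqrtr_sqr ler_sqrt ?sqr_ge0 //.
have CS : a0 * b0 + a1 * b1 + a2 * b2 <= Num.sqrt A * Num.sqrt B.
  have [h|h] := lerP (a0 * b0 + a1 * b1 + a2 * b2) 0.
    by apply: le_trans h _; rewrite mulr_ge0 ?sqrtr_ge0.
  rewrite -sqrtrM // -[X in X <= _](ger0_norm (ltW h)) -sqrtr_sqr.
  rewrite ler_sqrt ?mulr_ge0 //.
  have := sqr_ge0 (a0 * b1 - a1 * b0); have := sqr_ge0 (a0 * b2 - a2 * b0).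
  have := sqr_ge0 (a1 * b2 - a2 * b1).
  rewrite /A /B; nra.
have e : (Num.sqrt A + Num.sqrt B) ^+ 2 = A + B + 2 * (Num.sqrt A * Num.sqrt B).
  by rewrite sqrrD !sqr_sqrtr //; ring.
rewrite e; rewrite /A /B; nra.
Qed.


Lemma enormD u v : enorm (u + v) <= enorm u + enorm v.
Proof. by rewrite !enormE !mxE; apply: sqrt_tri. Qed.

Lemma enorm_rev u v : `|enorm u - enorm v| <= enorm (u - v).
Proof.
have h1 := enormD (u - v) v; have h2 := enormD (v - u) u.
rewrite subrK in h1; rewrite subrK enormB in h2.
rewrite ler_norml; apply/andP; split; lra.
Qed.

Lemma enorm_gt0 u : u != 0 -> 0 < enorm u.
Proof.
move=> hu; rewrite lt_neqAle enorm_ge0 andbT eq_sym; apply: contra hu.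
rewrite enormE sqrtr_eq0 => h.
have h0 : u 0 0 ^+ 2 = 0 by apply/eqP; rewrite eq_le sqr_ge0 andbT; nra.
have h1 : u 0 1 ^+ 2 = 0 by apply/eqP; rewrite eq_le sqr_ge0 andbT; nra.
have h2 : u 0 2 ^+ 2 = 0 by apply/eqP; rewrite eq_le sqr_ge0 andbT; nra.
apply/eqP/rowP => j; rewrite mxE.
have : (j = 0 \/ j = 1 \/ j = 2).
  case: j => [[|[|[|n]]] hj]; [left|right;left|right;right|by []]; by apply/val_inj.
by move=> [->|[->|->]]; apply/eqP; rewrite -sqrf_eq0; apply/eqP.
Qed.

Definition dS (x : 'rV[R]_3) (A : set 'rV[R]_3) := [set enorm (x - y) | y in A].

Lemma dS_lb x A : has_lbound (dS x A).
Proof. by exists 0 => z [y _ <-]; apply: enorm_ge0. Qed.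

Lemma dist_le x A y : A y -> dist_set x A <= enorm (x - y).
Proof. by move=> Ay; apply: (ge_inf (dS_lb x A)); exists y. Qed.

Lemma dist_ge x A (a : R) : A !=set0 -> (forall y, A y -> a <= enorm (x - y)) ->
  a <= dist_set x A.
Proof.
move=> [y Ay] h; apply: lb_le_inf; first by exists (enorm (x - y)), y.
by move=> z [w Aw <-]; apply: h.
Qed.

Lemma dist_ge0 x A : A !=set0 -> 0 <= dist_set x A.
Proof. by move=> hA; apply: dist_ge => // y _; apply: enorm_ge0. Qed.

Lemma dist_mono x A B : A `<=` B -> A !=set0 -> dist_set x B <= dist_set x A.
Proof. by move=> AB hA; apply: dist_ge => // y Ay; apply: dist_le; apply: AB. Qed.

Lemma edge_ne (q : 'rV[R]_3) : edge q !=set0.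
Proof. by exists 0, 0; rewrite ?scale0r /=. Qed.

Lemma edge0 (q : 'rV[R]_3) : edge q 0.
Proof. by exists 0; rewrite ?scale0r /=. Qed.

Lemma part1 (q x : 'rV[R]_3) : enorm q = 1 ->
  dist_set x (edge q) <= enorm (x - enorm x *: q) <= 2 * dist_set x (edge q).
Proof.
move=> hq; apply/andP; split.
  by apply: dist_le; exists (enorm x) => //; apply: enorm_ge0.
rewrite -ler_pdivrMl //; apply: dist_ge; first exact: edge_ne.
move=> _ [t t0 <-] /=.
have h1 := enormD (x - t *: q) (t *: q - enorm x *: q).
rewrite -addrA (addrA (- _)) addNr add0r in h1.
rewrite -scalerBl enormZ hq mulr1 in h1.
have h2 := enorm_rev (t *: q) x.
rewrite enormZ hq mulr1 (ger0_norm t0) enormB in h2.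
lra.
Qed.


Lemma fin_min (T : finType) (P : pred T) (f : T -> R) :
  (forall t, P t -> 0 < f t) ->
  exists c : R, [/\ 0 < c, c <= 1 & forall t, P t -> c <= f t].
Proof.
move=> hf.
suff : forall s : seq T, exists c : R,
    [/\ 0 < c, c <= 1 & forall t, t \in s -> P t -> c <= f t].
  by move=> /(_ (enum T)) [c [c0 c1 hc]]; exists c; split => // t; apply: hc; rewrite mem_enum.
elim=> [|a s [c [c0 c1 hc]]]; first by exists 1; split.
case Pa: (P a).
  exists (Num.min c (f a)); split.
  - by rewrite lt_min c0 hf.
  - by rewrite ge_min c1.
  - move=> t; rewrite in_cons => /orP [/eqP -> _|ts Pt]; first by rewrite ge_min lexx orbT.
    by rewrite ge_min hc.
exists c; split => // t; rewrite in_cons => /orP [/eqP -> |ts Pt]; first by rewrite Pa.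
exact: hc.
Qed.


Lemma qbound (c : R) x (r di : R) : 0 < c -> c <= 1 -> 0 < enorm x -> 0 < r ->
  c * enorm x <= di -> di <= enorm x ->
  c <= Num.min di r / Num.min (enorm x) r <= 1.
Proof.
move=> c0 c1 x0 r0 hc hd.
have m0 : 0 < Num.min (enorm x) r by rewrite lt_min x0 r0.
have mx : Num.min (enorm x) r <= enorm x by rewrite ge_min lexx.
have mr : Num.min (enorm x) r <= r by rewrite ge_min lexx orbT.
apply/andP; split.
  rewrite ler_pdivlMr // le_min; apply/andP; split.
    apply: le_trans hc; apply: ler_wpM2l => //; exact: ltW.
  apply: le_trans mr; rewrite ler_piMl //; exact: ltW.
rewrite ler_pdivrMr // mul1r le_min; apply/andP; split.
  by rewrite ge_min hd.
by rewrite ge_min lexx orbT.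
Qed.

Lemma powbound (c q a : R) : 0 < c -> c <= q -> q <= 1 ->
  q `^ a = expR (a * ln q) /\ `|a * ln q| <= `|a| * (- ln c).
Proof.
move=> c0 cq q1.
have q0 : 0 < q by apply: lt_le_trans cq.
split; first by rewrite /powR (gt_eqF q0).
have h1 : ln c <= ln q by rewrite ler_ln ?posrE.
have h2 : ln q <= 0 by apply: ln_le0.
rewrite normrM (ler0_norm h2); apply: ler_wpM2l; first exact: normr_ge0.
lra.
Qed.

End E.

Theorem lemma3p1 (R : realType) (N0 : nat) (p : 'I_N0 -> 'rV[R]_3)
    (M : set 'rV[R]_3) (HM : polyhedral_cone p M) :
  (forall (i : 'I_N0) (x : 'rV[R]_3), cone M x ->
     dist_set x (edge (p i)) <= enorm (x - enorm x *: p i)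
     <= 2 * dist_set x (edge (p i)))
  /\
  (forall alpha : 'I_N0 -> R, exists N : R, 0 < N /\
     forall (x : 'rV[R]_3) (r : R) (k : 'I_N0), cone M x -> 0 < r ->
       dist_set x (\bigcup_(i in setT) edge (p i)) = dist_set x (edge (p k)) ->
       let q := fun j : 'I_N0 =>
         Num.min (dist_set x (edge (p j))) r / Num.min (enorm x) r in
       N^-1 * (q k `^ alpha k) <= \prod_(i < N0) (q i `^ alpha i)
       <= N * (q k `^ alpha k)).
Proof.
case: HM => [[_ _ _ _ [hp pinj]] _].
split; first by move=> i x _; apply: part1.
move=> alpha.
have hpos : forall ij : 'I_N0 * 'I_N0, ij.1 != ij.2 ->
    0 < enorm (p ij.1 - p ij.2) / 4.
  move=> [i j] /= hij; rewrite divr_gt0 // enorm_gt0 // subr_eq0.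
  by apply: contra hij => /eqP /pinj ->.
have [c [c0 c1 hc]] := @fin_min R _ (fun ij : 'I_N0 * 'I_N0 => ij.1 != ij.2) _ hpos.
set L := - ln c.
have L0 : 0 <= L by rewrite /L oppr_ge0 ln_le0.
set S := \sum_(i < N0) `|alpha i| * L.
have S0 : 0 <= S by apply: sumr_ge0 => i _; rewrite mulr_ge0 ?normr_ge0.
exists (expR S); split; first exact: expR_gt0.
move=> x r k [xn0 _] r0 hk.
pose q := fun j : 'I_N0 =>
  Num.min (dist_set x (edge (p j))) r / Num.min (enorm x) r.
change ((expR S)^-1 * q k `^ alpha k <= \prod_(i < N0) q i `^ alpha i
  <= expR S * q k `^ alpha k).
have x0 := enorm_gt0 x xn0.
have hd : forall i, i != k -> c <= q i <= 1.
  move=> i ik; apply: qbound => //.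
    have dki : dist_set x (edge (p k)) <= dist_set x (edge (p i)).
      rewrite -hk; apply: dist_mono; last exact: edge_ne.
      by move=> y ey; exists i.
    have /andP[_ hi] := part1 (p i) x (hp i); have /andP[_ hk'] := part1 (p k) x (hp k).
    have e : enorm x *: (p i - p k) = (x - enorm x *: p k) - (x - enorm x *: p i).
      by rewrite scalerBr opprB [RHS]addrC addrA subrK.
    have := enormD (x - enorm x *: p k) (- (x - enorm x *: p i)).
    rewrite enormN -e enormZ (ger0_norm (ltW x0)) => h.
    have /= hcik := hc (i, k) ik.
    have : c * enorm x <= enorm (p i - p k) / 4 * enorm x.
      by apply: ler_wpM2r => //; exact: ltW.
    nra.
  by have := @dist_le _ x _ _ (edge0 (p i)); rewrite subr0.
rewrite (bigD1 k) //=.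
rewrite (eq_bigr (fun i => expR (alpha i * ln (q i)))); last first.
  by move=> i ik; have /andP[h1 h2] := hd i ik; case: (powbound c (q i) (alpha i) c0 h1 h2).
rewrite -expR_sum.
set T := \sum_(i < N0 | i != k) _.
have hT : `|T| <= S.
  apply: le_trans (ler_norm_sum _ _ _) _.
  apply: (@le_trans _ _ (\sum_(i < N0 | i != k) `|alpha i| * L)).
    apply: ler_sum => i ik; have /andP[h1 h2] := hd i ik.
    by case: (powbound c (q i) (alpha i) c0 h1 h2).
  rewrite /S [X in _ <= X](bigD1 k) //= lerDr.
  by rewrite mulr_ge0 ?normr_ge0.
move: hT; rewrite ler_norml => /andP [hT1 hT2].
have Q0 := powR_ge0 (q k) (alpha k).
rewrite -expRN; apply/andP; split.
  rewrite [X in X <= _]mulrC; apply: ler_wpM2l => //; rewrite ler_expR; lra.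
rewrite [X in _ <= X]mulrC; apply: ler_wpM2l => //; rewrite ler_expR; lra.
Qed.
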